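(* Let $\mathbf{U}^{(j)}\in\mathbb{C}^{n_j\times n_j}$ be unitary for $j\in[d]$, let $\mathcal{S}\subset[n_1]\times\cdots\times[n_d]$ be a set of $r$ indices, and let $$\mathcal{L}_{\rm Tucker}:=\{\mathcal{C}\times_1\mathbf{U}^{(1)}\cdots\times_d\mathbf{U}^{(d)}:\mathcal{C}\in\mathbb{C}^{n_1\times\cdots\times n_d},\ \mathcal{C}_{\mathbf{i}}=0\text{ for all }\mathbf{i}\notin\mathcal{S}\}.$$ Every $\mathcal{Y}\in\mathcal{L}_{\rm Tucker}$ is written in standard form $\mathcal{Y}=\sum_{\mathbf{i}=(i_1,\dots,i_d)\in\mathcal{S}}\mathcal{C}_{\mathbf{i}}\bigcirc_{\ell=1}^d\mathbf{U}^{(\ell)}_{i_\ell}$ over the basis $\mathcal{B}=\{\bigcirc_{\ell=1}^d\mathbf{U}^{(\ell)}_{i_\ell}:\mathbf{i}\in\mathcal{S}\}$, where $\mathbf{U}^{(\ell)}_{i}$ is the $i$-th column of $\mathbf{U}^{(\ell)}$. Let $\epsilon\in(0,3/4]$ and for each $j\in[d]$ let $\mathbf{A}_j\in\mathbb{C}^{m_j\times n_j}$ be an $(\epsilon/4d)$-JL embedding into $\mathbb{C}^{m_j}$ of the set of $2r^2-r$ vectors $\bigcup_{k\ne h}\{\mathbf{y}^{(j)}_k\pm\mathbf{y}^{(j)}_h,\mathbf{y}^{(j)}_k\pm\mathrm{i}\,\mathbf{y}^{(j)}_h\}\cup\{\mathbf{y}^{(j)}_k\}_k$, where $\{\mathbf{y}^{(j)}_k\}_{k\in[r]}$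 are the mode-$j$ factor vectors $\mathbf{U}^{(j)}_{i_j}$ of the $r$ basis tensors. Then for every $\mathcal{Y}\in\mathcal{L}_{\rm Tucker}$, $$\big|\|\mathcal{Y}\|^2-\|\mathcal{Y}\times_1\mathbf{A}_1\cdots\times_d\mathbf{A}_d\|^2\big|\le\epsilon'\|\mathcal{Y}\|^2,$$ where $$\epsilon':=\begin{cases}\big(\epsilon+e\sqrt{r(r-1)}\,\epsilon^d\big)e&\text{if }\mu_{\mathcal{B}}=0,\\ \epsilon\big(e+e^2\sqrt{r(r-1)}\max(\epsilon^{d-1},\mu_{\mathcal{B}}^{d-1})\big)&\text{otherwise.}\end{cases}$$
   Context: Tensors carry the inner product $\langle\mathcal{X},\mathcal{Y}\rangle=\sum\mathcal{X}_{i_1\dots i_d}\overline{\mathcal{Y}_{i_1\dots i_d}}$ and norm $\|\cdot\|$; $\bigcirc$ is the outer product; $(\mathcal{Z}\times_j\mathbf{U})_{i_1,\dots,\ell,\dots,i_d}=\sum_{i_j}\mathcal{Z}_{i_1,\dots,i_j,\dots,i_d}\mathbf{U}_{\ell,i_j}$; $\mathrm{i}$ is the imaginary unit, $e$ Euler's number. A matrix is an $\epsilon$-JL embedding of $S$ if $\|\mathbf{A}x\|_2^2=(1+\epsilon_x)\|x\|_2^2$ with $\epsilon_x\in(-\epsilon,\epsilon)$ for all $x\in S$. For a basis $\{\bigcirc_\ell\mathbf{y}^{(\ell)}_k\}_{k\in[r]}$ of unit-vector rank-one tensors, $\mu_{\mathcal{B}}=\max_{\ell\in[d]}\max_{k\ne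 h}|\langle\mathbf{y}^{(\ell)}_k,\mathbf{y}^{(\ell)}_h\rangle|$. *)

(* Defs.v *)
From mathcomp Require Import all_boot all_order all_algebra.
From mathcomp Require Import all_reals all_analysis.
From mathcomp Require Export complex.
Set Implicit Arguments. Unset Strict Implicit. Unset Printing Implicit Defensive.
Import Order.TTheory GRing.Theory Num.Theory.
Local Open Scope ring_scope.

Definition cabs2 (R : realType) (x : R[i]) : R :=
  complex.Re x ^+ 2 + complex.Im x ^+ 2.

Definition idx (d : nat) (n : 'I_d -> nat) : finType :=
  {dffun forall l : 'I_d, 'I_(n l)}.

Definition tensor (R : realType) (d : nat) (n : 'I_d -> nat) := idx n -> R[i].

Definition tnorm2 (R : realType) d (n : 'I_d -> nat) (X : tensor R n) : R :=
  \sum_(i : idx n) cabs2 (X i).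

Definition vnorm2 (R : realType) k (x : 'cV[R[i]]_k) : R :=
  \sum_(i < k) cabs2 (x i 0).

Definition cinner (R : realType) k (x y : 'cV[R[i]]_k) : R[i] :=
  \sum_(i < k) x i 0 * conjc (y i 0).

Definition multi_mode_prod (R : realType) d (n m : 'I_d -> nat)
    (X : tensor R n) (A : forall l : 'I_d, 'M[R[i]]_(m l, n l)) : tensor R m :=
  fun k => \sum_(i : idx n) X i * \prod_(l < d) A l (k l) (i l).

Definition unitary (R : realType) k (U : 'M[R[i]]_k) : Prop :=
  U *m (map_mx conjc U)^T = 1%:M.

Definition JL_embedding (R : realType) m k (eps : R) (A : 'M[R[i]]_(m, k))
    (S : 'cV[R[i]]_k -> Prop) : Prop :=
  forall x, S x -> exists ex : R,
    - eps < ex < eps /\ vnorm2 (A *m x) = (1 + ex) * vnorm2 x.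

Definition factor_vec (R : realType) d (n : 'I_d -> nat)
    (U : forall l : 'I_d, 'M[R[i]]_(n l)) (l : 'I_d) (i : idx n) : 'cV[R[i]]_(n l) :=
  col (i l) (U l).

Definition JL_set (R : realType) d (n : 'I_d -> nat)
    (U : forall l : 'I_d, 'M[R[i]]_(n l)) (S : {set idx n}) (j : 'I_d)
    (x : 'cV[R[i]]_(n j)) : Prop :=
  (exists k h, [/\ k \in S, h \in S, k != h &
     [\/ x = factor_vec U j k + factor_vec U j h,
         x = factor_vec U j k - factor_vec U j h,
         x = factor_vec U j k + 'i%C *: factor_vec U j h |
         x = factor_vec U j k - 'i%C *: factor_vec U j h]])
  \/ (exists2 k, k \in S & x = factor_vec U j k).
Arguments JL_set {R d n} U S j x.

(* mu_B = max_l max_{k != h} |<y^(l)_k, y^(l)_h>| (0 if there is no pair) *)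
Definition muB (R : realType) d (n : 'I_d -> nat)
    (U : forall l : 'I_d, 'M[R[i]]_(n l)) (S : {set idx n}) : R :=
  \big[Num.max/0]_(l < d) \big[Num.max/0]_(k in S)
     \big[Num.max/0]_(h in S | h != k)
        Num.sqrt (cabs2 (cinner (factor_vec U l k) (factor_vec U l h))).

Definition eps_prime (R : realType) (d r : nat) (eps mu : R) : R :=
  let e := expR (1 : R) in
  let s := Num.sqrt ((r * (r - 1))%:R : R) in
  if mu == 0 then (eps + e * s * eps ^+ d) * e
  else eps * (e + e ^+ 2 * s * Num.max (eps ^+ d.-1) (mu ^+ d.-1)).

(* Main.v *)
Require Import Defs.
From mathcomp Require Import all_boot all_order all_algebra.
From mathcomp Require Import all_reals all_analysis.
From mathcomp Require Import complex.
From mathcomp Require Import boolp.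
From mathcomp Require Import ring lra.
Import Order.TTheory GRing.Theory Num.Theory.
Local Open Scope ring_scope.

Module Helpers.
Set Implicit Arguments. Unset Strict Implicit. Unset Printing Implicit Defensive.
Local Open Scope complex_scope.

Lemma distr_dffun (K : comNzRingType) d (n : 'I_d -> nat)
  (F : forall l : 'I_d, 'I_(n l) -> K) :
  \prod_(l < d) \sum_(j < n l) F l j = \sum_(f : idx n) \prod_(l < d) F l (f l).
Proof.
case: (boolP [forall l, (0 < n l)%N]) => [/forallP hn | ].
- pose N := \big[maxn/0%N]_(l < d) n l.
  have le l : (n l <= N)%N by exact: leq_bigmax.
  pose F' l (j : 'I_N) := F l (insubd (Ordinal (hn l)) (val j)).
  pose Q l (j : 'I_N) := (val j < n l)%N.
  transitivity (\prod_(l < d) \sum_(j | Q l j) F' l j).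
    apply: eq_bigr => l _.
    transitivity (\sum_(j < n l | true) (fun j => F l (insubd (Ordinal (hn l)) j)) j).
      by apply: eq_bigr => j _; rewrite valKd.
    have := @big_ord_widen_cond K 0 +%R (n l) N xpredT (fun j => F l (insubd (Ordinal (hn l)) j)) (le l).
    by move=> ->; apply: eq_bigl => j.
  rewrite bigA_distr_big_dep.
  pose h (f : idx n) : {ffun 'I_d -> 'I_N} := [ffun l => widen_ord (le l) (f l)].
  pose h' (g : {ffun 'I_d -> 'I_N}) : idx n :=
    finfun (fun l : 'I_d => (insubd (Ordinal (hn l)) (val (g l)) : 'I_(n l))).
  rewrite (reindex_onto h h').
    apply: eq_big => [f | f _].
      have -> : h' (h f) == f.
        by apply/eqP/ffunP => l; rewrite /h' /h !ffunE /= valKd.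
      rewrite andbT; apply/familyP => l; rewrite /h ffunE /Q /=.
        by rewrite unfold_in /=.
    by apply: eq_bigr => l _; rewrite /F' /h ffunE /= valKd.
  move=> g /familyP Hg; apply/ffunP => l; rewrite /h /h' !ffunE.
  apply: val_inj => /=; rewrite insubdK //; have := Hg l; by rewrite unfold_in.
- rewrite negb_forall => /existsP[l0]; rewrite -eqn0Ngt => /eqP h0.
  rewrite (bigD1 l0) //= big1 ?mul0r; last by move=> j _; have := ltn_ord j; rewrite {2}h0.
  by rewrite big1 // => f _; have := ltn_ord (f l0); rewrite {2}h0.
Qed.

Section C.
Variable R : realType.
Implicit Types z : R[i].

Lemma cabs2C z : (cabs2 z)%:C = z * conjc z.
Proof. by rewrite /cabs2 add_Re2_Im2 normCK. Qed.

Lemma tnorm2_expand d (m : 'I_d -> nat) (I : finType) (S : {set I})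
  (C : I -> R[i]) (v : I -> forall l, 'cV[R[i]]_(m l)) :
  (tnorm2 (fun p : idx m => \sum_(k in S) C k * \prod_(l < d) v k l (p l) 0))%:C
  = \sum_(k in S) \sum_(h in S) C k * conjc (C h) * \prod_(l < d) cinner (v k l) (v h l).
Proof.
rewrite /tnorm2 raddf_sum /=.
under eq_bigr do rewrite cabs2C rmorph_sum big_distrl /=.
under eq_bigr do under eq_bigr do rewrite big_distrr /=.
rewrite exchange_big /=; apply: eq_bigr => k _.
rewrite exchange_big /=; apply: eq_bigr => h _.
rewrite /cinner distr_dffun big_distrr /=; apply: eq_bigr => p _.
rewrite rmorphM rmorph_prod /= -mulrA -mulrA; congr (_ * _).
rewrite mulrCA; congr (_ * _).
by rewrite -big_split.
Qed.
End C.

Section C2.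
Variable R : realType.
Variables (d : nat) (n m : 'I_d -> nat) (U : forall l : 'I_d, 'M[R[i]]_(n l))
  (S : {set idx n}) (A : forall l : 'I_d, 'M[R[i]]_(m l, n l)) (C : tensor R n).
Hypothesis CS : forall i, i \notin S -> C i = 0.

Lemma Y_form p : multi_mode_prod C U p =
  \sum_(k in S) C k * \prod_(l < d) factor_vec U l k (p l) 0.
Proof.
rewrite /multi_mode_prod [RHS]big_mkcond /=; apply: eq_bigr => i _.
case: ifP => [_|/negbT /CS ->]; last by rewrite mul0r.
by congr (_ * _); apply: eq_bigr => l _; rewrite /factor_vec !mxE.
Qed.

Lemma YA_form p : multi_mode_prod (multi_mode_prod C U) A p =
  \sum_(k in S) C k * \prod_(l < d) (A l *m factor_vec U l k) (p l) 0.
Proof.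
rewrite {1}/multi_mode_prod.
under eq_bigr do rewrite Y_form big_distrl /=.
rewrite exchange_big /=; apply: eq_bigr => k _.
under eq_bigr do rewrite -mulrA.
rewrite -big_distrr /=; congr (_ * _).
under [RHS]eq_bigr do rewrite mxE.
rewrite distr_dffun; apply: eq_bigr => i _.
rewrite -big_split /=; apply: eq_bigr => l _.
by rewrite /factor_vec !mxE mulrC.
Qed.
End C2.

Section V.
Variable R : realType.
Implicit Types z : R[i].

Definition I0 : R[i] := Complex 0 1.
Definition rn z : R := Num.sqrt (cabs2 z).

Lemma rnE z : `|z| = (rn z)%:C.
Proof. by rewrite normc_def. Qed.

Lemma rn_ge0 z : 0 <= rn z. Proof. exact: sqrtr_ge0. Qed.

Lemma rnD x y : rn (x + y) <= rn x + rn y.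
Proof. by rewrite -lecR rmorphD /= -!rnE ler_normD. Qed.

Lemma rnM x y : rn (x * y) = rn x * rn y.
Proof. by apply: complexI; rewrite rmorphM /= -!rnE normrM. Qed.

Lemma rnR (r : R) : rn (r%:C) = `|r|.
Proof. by rewrite /rn /cabs2 /= expr0n /= addr0 sqrtr_sqr. Qed.

Lemma rnN x : rn (- x) = rn x.
Proof. by apply: complexI; rewrite -!rnE normrN. Qed.

Lemma rnJ x : rn (conjc x) = rn x.
Proof. by case: x => a b; rewrite /rn /cabs2 /= sqrrN. Qed.

Lemma rn_i : rn I0 = 1.
Proof. by rewrite /rn /cabs2 /= expr0n /= add0r expr1n sqrtr1. Qed.

Lemma rn_sum (I : finType) (P : pred I) (F : I -> R[i]) :
  rn (\sum_(i | P i) F i) <= \sum_(i | P i) rn (F i).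
Proof.
rewrite -lecR raddf_sum /= -rnE; apply: le_trans (ler_norm_sum _ _ _) _.
by rewrite le_eqVlt; apply/orP; left; apply/eqP; apply: eq_bigr => i _; rewrite rnE.
Qed.

Lemma rn_prod (I : finType) (P : pred I) (F : I -> R[i]) :
  rn (\prod_(i | P i) F i) = \prod_(i | P i) rn (F i).
Proof.
apply: complexI; rewrite rmorph_prod /= -rnE normr_prod.
by apply: eq_bigr => i _; rewrite rnE.
Qed.

Lemma rn_sqr z : rn z ^+ 2 = cabs2 z.
Proof. rewrite sqr_sqrtr // /cabs2; apply: addr_ge0; exact: sqr_ge0. Qed.

Lemma conj_i : conjc I0 = - I0.
Proof. by apply/eqP; rewrite eq_complex /= ?opprK ?oppr0 ?eqxx. Qed.

Lemma conjN1 : conjc (-1 : R[i]) = -1.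
Proof. by apply/eqP; rewrite eq_complex /= ?opprK ?oppr0 ?eqxx. Qed.
Lemma conj1 : conjc (1 : R[i]) = 1.
Proof. by apply/eqP; rewrite eq_complex /= ?opprK ?oppr0 ?eqxx. Qed.
Lemma conjNi : conjc (- I0) = I0.
Proof. by apply/eqP; rewrite eq_complex /= ?opprK ?oppr0 ?eqxx. Qed.

Lemma ii : I0 * I0 = -1.
Proof. by apply/eqP; rewrite eq_complex /= !mul0r mulr1 mulr0 add0r oppr0 addr0 !eqxx. Qed.

Variable k : nat.
Implicit Types x y w : 'cV[R[i]]_k.

Lemma cinnerDl x y w : cinner (x + y) w = cinner x w + cinner y w.
Proof. by rewrite /cinner -big_split; apply: eq_bigr => i _; rewrite !mxE mulrDl. Qed.

Lemma cinnerZl c x w : cinner (c *: x) w = c * cinner x w.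
Proof. by rewrite /cinner big_distrr; apply: eq_bigr => i _; rewrite !mxE /= mulrA. Qed.

Lemma cinnerDr x y w : cinner w (x + y) = cinner w x + cinner w y.
Proof. by rewrite /cinner -big_split; apply: eq_bigr => i _; rewrite !mxE rmorphD mulrDr. Qed.

Lemma cinnerZr c x w : cinner w (c *: x) = conjc c * cinner w x.
Proof. by rewrite /cinner big_distrr; apply: eq_bigr => i _; rewrite !mxE rmorphM mulrCA. Qed.

Lemma vnorm2C x : (vnorm2 x)%:C = cinner x x.
Proof. by rewrite /vnorm2 raddf_sum; apply: eq_bigr => i _; exact: cabs2C. Qed.

Lemma vnorm2_ge0 x : 0 <= vnorm2 x.
Proof. by apply: sumr_ge0 => i _; rewrite /cabs2 addr_ge0 ?sqr_ge0. Qed.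

Lemma cinner_exp x c y : cinner (x + c *: y) (x + c *: y) =
  cinner x x + conjc c * cinner x y + c * cinner y x + c * conjc c * cinner y y.
Proof. by rewrite !cinnerDl !cinnerDr !cinnerZl !cinnerZr; ring. Qed.

Definition Nc x := cinner x x.

Lemma Nc_p1 x y : Nc (x + 1 *: y) = cinner x x + cinner x y + cinner y x + cinner y y.
Proof. by rewrite /Nc cinner_exp conj1 !mul1r. Qed.
Lemma Nc_m1 x y : Nc (x + (-1) *: y) = cinner x x - cinner x y - cinner y x + cinner y y.
Proof. rewrite /Nc cinner_exp conjN1; ring. Qed.
Lemma Nc_pi x y : Nc (x + I0 *: y) = cinner x x - I0 * cinner x y + I0 * cinner y x + cinner y y.
Proof.
rewrite /Nc cinner_exp conj_i; apply/eqP; rewrite -subr_eq0; apply/eqP.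
transitivity ((I0 * I0 + 1) * (- cinner y y)); first by ring.
by rewrite ii addNr mul0r.
Qed.
Lemma Nc_mi x y : Nc (x + (- I0) *: y) = cinner x x + I0 * cinner x y - I0 * cinner y x + cinner y y.
Proof.
rewrite /Nc cinner_exp conjNi; apply/eqP; rewrite -subr_eq0; apply/eqP.
transitivity ((I0 * I0 + 1) * (- cinner y y)); first by ring.
by rewrite ii addNr mul0r.
Qed.

Lemma polar_aux (p q r' s N1 N2 N3 N4 : R[i]) :
  N1 = p + q + r' + s -> N2 = p - q - r' + s ->
  N3 = p - I0 * q + I0 * r' + s -> N4 = p + I0 * q - I0 * r' + s ->
  4%:R * q = N1 - N2 + I0 * N3 - I0 * N4.
Proof.
move=> -> -> -> ->.
apply/eqP; rewrite -subr_eq0; apply/eqP.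
transitivity ((I0 * I0 + 1) * (2%:R * q - 2%:R * r')); first by ring.
by rewrite ii addNr mul0r.
Qed.

Lemma polar x y : 4%:R * cinner x y =
  Nc (x + 1 *: y) - Nc (x + (-1) *: y) + I0 * Nc (x + I0 *: y) - I0 * Nc (x + (- I0) *: y).
Proof. exact: (polar_aux (Nc_p1 x y) (Nc_m1 x y) (Nc_pi x y) (Nc_mi x y)). Qed.

Lemma par_aux (a1 a2 a3 a4 bx b_y : R) (p q r' s : R[i]) :
  a1%:C = p + q + r' + s -> a2%:C = p - q - r' + s ->
  a3%:C = p - I0 * q + I0 * r' + s -> a4%:C = p + I0 * q - I0 * r' + s ->
  bx%:C = p -> b_y%:C = s -> a1 + a2 + a3 + a4 = 4%:R * (bx + b_y).
Proof.
move=> h1 h2 h3 h4 h5 h6; apply: complexI.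
rewrite rmorphM rmorph_nat !rmorphD /= h1 h2 h3 h4 h5 h6; ring.
Qed.

Lemma parallelogram x y :
  vnorm2 (x + 1 *: y) + vnorm2 (x + (-1) *: y) + vnorm2 (x + I0 *: y) + vnorm2 (x + (- I0) *: y)
  = 4%:R * (vnorm2 x + vnorm2 y).
Proof.
exact: (par_aux (etrans (vnorm2C _) (Nc_p1 x y)) (etrans (vnorm2C _) (Nc_m1 x y))
  (etrans (vnorm2C _) (Nc_pi x y)) (etrans (vnorm2C _) (Nc_mi x y)) (vnorm2C x) (vnorm2C y)).
Qed.
End V.
Arguments I0 {R}.


Section NumL.
Variable R : realFieldType.

Lemma pow_le (t : R) N k : 0 <= t -> (k <= N)%N -> 2 * N%:R * t <= 1 ->
  (1 + t) ^+ k <= 1 + 2 * k%:R * t.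
Proof.
move=> t0 kN h; elim: k kN => [|k IH] kN; first by rewrite expr0 mulr0n mulr0 mul0r addr0.
have kN' : (k <= N)%N by apply: ltnW.
have := IH kN'; move=> ih.
have hk : k%:R * t <= N%:R * t.
  by apply: ler_wpM2r => //; rewrite ler_nat ltnW.
have hk1 : k.+1%:R * t <= N%:R * t by apply: ler_wpM2r => //; rewrite ler_nat.
rewrite exprS -natr1.
have h1 : (1 + t) * (1 + t) ^+ k <= (1 + t) * (1 + 2 * k%:R * t).
  by apply: ler_wpM2l => //; lra.
apply: le_trans h1 _.
rewrite -natr1 in hk1.
nra.
Qed.

Lemma bern (t : R) k : 0 <= t <= 1 -> 1 - k%:R * t <= (1 - t) ^+ k.
Proof.
move=> /andP[t0 t1]; elim: k => [|k IH]; first by rewrite expr0 mul0r subr0.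
rewrite exprS -natr1.
have h1 : (1 - t) * (1 - k%:R * t) <= (1 - t) * (1 - t) ^+ k.
  by apply: ler_wpM2l => //; lra.
apply: le_trans h1.
have : 0 <= k%:R * t * t by apply: mulr_ge0 => //; apply: mulr_ge0.
nra.
Qed.

Lemma diag_bound d (f : 'I_d -> R) (dl : R) : 0 <= dl <= 1 -> 2 * d%:R * dl <= 1 ->
  (forall l, `|f l - 1| <= dl) -> `|\prod_(l < d) f l - 1| <= 2 * d%:R * dl.
Proof.
move=> /andP[d0 d1] h2 hf.
have up : \prod_(l < d) f l <= (1 + dl) ^+ d.
  have -> : (1 + dl) ^+ d = \prod_(l < d) (1 + dl) by rewrite prodr_const card_ord.
  apply: ler_prod => l _.
  by have := hf l; rewrite ler_norml => /andP[? ?]; apply/andP; split; lra.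
have lo : (1 - dl) ^+ d <= \prod_(l < d) f l.
  have -> : (1 - dl) ^+ d = \prod_(l < d) (1 - dl) by rewrite prodr_const card_ord.
  apply: ler_prod => l _.
  by have := hf l; rewrite ler_norml => /andP[? ?]; apply/andP; split; lra.
have p1 := pow_le d0 (leqnn d) h2.
have b1 : 1 - d%:R * dl <= (1 - dl) ^+ d by apply: bern; rewrite d0 d1.
have : 0 <= d%:R * dl by apply: mulr_ge0.
rewrite ler_norml; move=> ?; apply/andP; split; lra.
Qed.
End NumL.


Section Pol.
Variable R : realType.

Lemma pol_lin (a g n1 n2 n3 n4 m1 m2 m3 m4 : R[i]) :
  4%:R * a = n1 - n2 + I0 * n3 - I0 * n4 -> 4%:R * g = m1 - m2 + I0 * m3 - I0 * m4 ->
  4%:R * (a - g) = (n1 - m1) - (n2 - m2) + I0 * (n3 - m3) - I0 * (n4 - m4).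
Proof. by move=> h1 h2; rewrite mulrBr h1 h2; ring. Qed.

Lemma rn_comb (z D1 D2 D3 D4 : R[i]) (b1 b2 b3 b4 : R) :
  4%:R * z = D1 - D2 + I0 * D3 - I0 * D4 ->
  rn D1 <= b1 -> rn D2 <= b2 -> rn D3 <= b3 -> rn D4 <= b4 ->
  4%:R * rn z <= b1 + b2 + b3 + b4.
Proof.
move=> E h1 h2 h3 h4.
have h4r : rn (4%:R : R[i]) = 4%:R.
  by rewrite -(rmorph_nat (real_complex R)) rnR ger0_norm.
rewrite -h4r -rnM E.
apply: le_trans (rnD _ _) _; rewrite rnN rnM rn_i mul1r.
apply: le_trans (lerD (rnD _ _) (lexx _)) _; rewrite rnM rn_i mul1r.
apply: le_trans (lerD (lerD (rnD _ _) (lexx _)) (lexx _)) _; rewrite rnN.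
by apply: lerD => //; apply: lerD => //; apply: lerD.
Qed.

Variables (k m' : nat) (A : 'M[R[i]]_(m', k)) (x y : 'cV[R[i]]_k) (dl : R).
Definition Pc (c : R[i]) := exists ex : R, `|ex| <= dl /\
   vnorm2 (A *m (x + c *: y)) = (1 + ex) * vnorm2 (x + c *: y).

Lemma rn_Dc c : Pc c ->
  rn (Nc (A *m x + c *: (A *m y)) - Nc (x + c *: y)) <= dl * vnorm2 (x + c *: y).
Proof.
move=> [ex [hex he]].
have e1 : A *m x + c *: (A *m y) = A *m (x + c *: y) by rewrite mulmxDr scalemxAr.
rewrite e1 /Nc -(vnorm2C (A *m _)) -(vnorm2C (x + _)) he -rmorphB /=.
have -> : (1 + ex) * vnorm2 (x + c *: y) - vnorm2 (x + c *: y) = ex * vnorm2 (x + c *: y) by ring.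
rewrite rnR normrM (ger0_norm (vnorm2_ge0 _)).
by rewrite ler_wpM2r // vnorm2_ge0.
Qed.

Lemma pol_bound : Pc 1 -> Pc (-1) -> Pc I0 -> Pc (- I0) ->
  rn (cinner (A *m x) (A *m y) - cinner x y) <= dl * (vnorm2 x + vnorm2 y).
Proof.
move=> /rn_Dc h1 /rn_Dc h2 /rn_Dc h3 /rn_Dc h4.
have E := pol_lin (polar (A *m x) (A *m y)) (polar x y).
have := rn_comb E h1 h2 h3 h4.
rewrite -!mulrDr parallelogram mulrCA => H.
by rewrite -(ler_pM2l (_ : 0 < 4%:R)).
Qed.
End Pol.


Lemma col_orth (R : realType) k (U : 'M[R[i]]_k) : unitary U ->
  forall a b : 'I_k, cinner (col a U) (col b U) = (a == b)%:R.
Proof.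
move=> hU a b; have H := mulmx1C hU.
have := congr1 (fun M : 'M[R[i]]_k => M b a) H; rewrite !mxE eq_sym => <-.
by rewrite /cinner; apply: eq_bigr => j _; rewrite !mxE mulrC.
Qed.

Lemma muB_ge0 (R : realType) d (n : 'I_d -> nat) (U : forall l : 'I_d, 'M[R[i]]_(n l))
  (S : {set idx n}) : 0 <= muB U S.
Proof.
have hm : forall x y : R, 0 <= x -> 0 <= y -> 0 <= Num.max x y.
  by move=> x y hx hy; rewrite le_max hx.
rewrite /muB; elim/big_ind: _ => //; move=> l _.
elim/big_ind: _ => //; move=> k _.
by elim/big_ind: _ => //.
Qed.

Lemma le_muB (R : realType) d (n : 'I_d -> nat) (U : forall l : 'I_d, 'M[R[i]]_(n l))
  (S : {set idx n}) l k h : k \in S -> h \in S -> h != k ->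
  rn (cinner (factor_vec U l k) (factor_vec U l h)) <= muB U S.
Proof.
move=> kS hS hk; rewrite /muB /rn.
apply: le_trans (le_bigmax _ _ l).
apply: le_trans (le_bigmax_cond _ _ kS).
by apply: (le_bigmax_cond _ (fun h => Num.sqrt (cabs2 (cinner (factor_vec U l k) (factor_vec U l h))))); rewrite hS hk.
Qed.


Section Main.
Variables (R : realType) (d : nat) (n m : 'I_d -> nat)
    (U : forall l : 'I_d, 'M[R[i]]_(n l)) (S : {set idx n})
    (A : forall l : 'I_d, 'M[R[i]]_(m l, n l)) (eps : R).
Hypotheses (hd : (0 < d)%N) (hU : forall l, unitary (U l)) (heps : 0 < eps <= 3 / 4)
  (hJL : forall j : 'I_d, JL_embedding (eps / (4 * d%:R)) (A j) (JL_set U S j)).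

Let dl := eps / (4 * d%:R).
Let y l k := factor_vec U l k.
Let G (k h : idx n) := \prod_(l < d) cinner (y l k) (y l h).
Let Aa (k h : idx n) := \prod_(l < d) cinner (A l *m y l k) (A l *m y l h).

Lemma dpos : 0 < d%:R :> R. Proof. by rewrite ltr0n. Qed.
Lemma dl_ge0 : 0 <= dl.
Proof. by rewrite /dl divr_ge0 // ?mulr_ge0 ?ler0n //; case/andP: heps => /ltW. Qed.
Lemma two_d_dl : 2 * d%:R * dl = eps / 2.
Proof. by rewrite /dl; field; rewrite ?(gt_eqF dpos) //; apply/andP. Qed.

Lemma orth l (k h : idx n) : cinner (y l k) (y l h) = (k l == h l)%:R.
Proof. exact: col_orth. Qed.

Lemma vn1 l k : vnorm2 (y l k) = 1.
Proof. by apply: complexI; rewrite vnorm2C orth eqxx. Qed.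

Lemma G_eq k h : G k h = (k == h)%:R.
Proof.
rewrite /G; case: eqP => [->|nkh].
  by rewrite big1 // => l _; rewrite orth eqxx.
have [l0 hl0] : exists l0, k l0 != h l0.
  apply/existsP; apply: contraT; rewrite negb_exists => /forallP hall.
  by case: nkh; apply/ffunP => l; apply/eqP; have := hall l; rewrite negbK.
by rewrite (bigD1 l0) //= orth (negbTE hl0) mul0r.
Qed.

Lemma hP l x : JL_set U S l x -> exists ex, `|ex| <= dl /\ vnorm2 (A l *m x) = (1 + ex) * vnorm2 x.
Proof.
move=> /(@hJL l x) [ex [/andP[h1 h2] he]]; exists ex; split => //.
by apply: ltW; rewrite ltr_norml h1.
Qed.

Lemma diag k : k \in S -> rn (G k k - Aa k k) <= eps / 2.
Proof.
move=> kS; rewrite G_eq eqxx.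
have -> : Aa k k = (\prod_(l < d) vnorm2 (A l *m y l k))%:C.
  by rewrite rmorph_prod /=; apply: eq_bigr => l _; rewrite vnorm2C.
have -> : (1 : R[i]) - (\prod_(l < d) vnorm2 (A l *m y l k))%:C
   = (1 - \prod_(l < d) vnorm2 (A l *m y l k))%:C by rewrite rmorphB rmorph1.
rewrite rnR distrC -two_d_dl; apply: diag_bound.
- rewrite dl_ge0 /= /dl ler_pdivrMr ?mulr_gt0 ?dpos // mul1r.
  case/andP: heps => _ h; apply: le_trans h _.
  have : 1 <= d%:R :> R by rewrite ler1n.
  lra.
- rewrite two_d_dl; case/andP: heps => _ h; lra.
move=> l; have [ex [hex he]] := @hP l (y l k) (or_intror (ex_intro2 _ _ k kS erefl)).
by rewrite he vn1 mulr1 addrAC subrr add0r.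
Qed.

Lemma offd k h : k \in S -> h \in S -> k != h ->
  rn (G k h - Aa k h) <= 2 * dl * (muB U S + 2 * dl) ^+ d.-1.
Proof.
move=> kS hS khne.
rewrite G_eq (negbTE khne) sub0r rnN /Aa rn_prod.
have per : forall l, rn (cinner (A l *m y l k) (A l *m y l h) - cinner (y l k) (y l h)) <= 2 * dl.
  move=> l.
  have P1 : Pc (A l) (y l k) (y l h) dl 1.
    apply: hP; left; exists k, h; split => //; apply: Or41; by rewrite scale1r.
  have P2 : Pc (A l) (y l k) (y l h) dl (-1).
    apply: hP; left; exists k, h; split => //; apply: Or42; by rewrite scaleN1r.
  have P3 : Pc (A l) (y l k) (y l h) dl I0.
    apply: hP; left; exists k, h; split => //; apply: Or43; by [].
  have P4 : Pc (A l) (y l k) (y l h) dl (- I0).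
    apply: hP; left; exists k, h; split => //; apply: Or44; by rewrite scaleNr.
  have := pol_bound P1 P2 P3 P4.
  by rewrite !vn1 mulrDr mulr1 -mulr2n mulr_natl.
have hl : forall l, rn (cinner (A l *m y l k) (A l *m y l h)) <= muB U S + 2 * dl.
  move=> l; have := rnD (cinner (A l *m y l k) (A l *m y l h) - cinner (y l k) (y l h)) (cinner (y l k) (y l h)).
  rewrite subrK => H; apply: le_trans H _; rewrite addrC; apply: lerD; last exact: per.
  by apply: le_muB => //; rewrite eq_sym.
have [l0 hl0] : exists l0, k l0 != h l0.
  apply/existsP; apply: contraT; rewrite negb_exists => /forallP hall.
  move/eqP: khne; case; apply/ffunP => l; apply/eqP; have := hall l; rewrite negbK.
  by [].
rewrite (bigD1 l0) //=.
apply: ler_pM.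
- exact: rn_ge0.
- by apply: prodr_ge0 => l _; exact: rn_ge0.
- have := per l0; by rewrite orth (negbTE hl0) subr0.
have -> : (muB U S + 2 * dl) ^+ d.-1 = \prod_(l < d | l != l0) (muB U S + 2 * dl).
  by rewrite prodr_const cardC1 card_ord.
by apply: ler_prod => l _; rewrite rn_ge0 hl.
Qed.

Let mu := muB U S.
Let B0 := 2 * dl * (mu + 2 * dl) ^+ d.-1.

Lemma B0_ge0 : 0 <= B0.
Proof.
rewrite /B0; apply: mulr_ge0; first by apply: mulr_ge0 => //; exact: dl_ge0.
by apply: exprn_ge0; apply: addr_ge0; [exact: muB_ge0 | apply: mulr_ge0 => //; exact: dl_ge0].
Qed.

Lemma B0_le : B0 <= eps * Num.max eps mu ^+ d.-1.
Proof.
have e0 : 0 < eps by case/andP: heps.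
have mu0 : 0 <= mu by exact: muB_ge0.
set M := Num.max eps mu.
have M0 : 0 <= M by rewrite le_max ltW.
have eM : eps <= M by rewrite le_max lexx.
have muM : mu <= M by rewrite le_max lexx orbT.
have d1 : 1 <= d%:R :> R by rewrite ler1n.
have dl2 : 2 * dl = eps / (2 * d%:R).
  by rewrite /dl; field; rewrite ?(gt_eqF dpos) //.
pose t : R := (2 * d%:R)^-1.
have t0 : 0 <= t by rewrite invr_ge0 mulr_ge0 ?ler0n.
have hdt : 2 * d%:R * t = 1 by rewrite /t mulfV // mulf_neq0 // (gt_eqF dpos).
have dl2' : 2 * dl = eps * t by rewrite dl2.
have h1 : mu + 2 * dl <= M * (1 + t).
  rewrite dl2' mulrDr mulr1; apply: lerD => //.
  by rewrite ler_wpM2r.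
have h2 : (mu + 2 * dl) ^+ d.-1 <= (M * (1 + t)) ^+ d.-1.
  apply: lerXn2r => //; rewrite ?nnegrE //.
    by apply: addr_ge0 => //; rewrite dl2'; apply: mulr_ge0 => //; exact: ltW.
  by apply: mulr_ge0 => //; apply: addr_ge0.
have h3 : (1 + t) ^+ d.-1 <= 2.
  have hle : 2 * d%:R * t <= 1 by rewrite hdt.
  have := @pow_le _ t d d.-1 t0 (leq_pred d) hle.
  have : (d.-1)%:R <= d%:R :> R by rewrite ler_nat leq_pred.
  move=> hd1 hp; apply: le_trans hp _.
  nra.
rewrite exprMn in h2.
have P0 : 0 <= M ^+ d.-1 by apply: exprn_ge0.
have h4 : (mu + 2 * dl) ^+ d.-1 <= M ^+ d.-1 * 2.
  by apply: le_trans h2 _; apply: ler_wpM2l.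
rewrite /B0 {1}dl2'.
have h5 : eps * t * (mu + 2 * dl) ^+ d.-1 <= eps * t * (M ^+ d.-1 * 2).
  by apply: ler_wpM2l => //; apply: mulr_ge0 => //; exact: ltW.
apply: le_trans h5 _.
have h2t : 2 * t <= 1 by nra.
have : 0 <= eps * M ^+ d.-1 by apply: mulr_ge0 => //; exact: ltW.
nra.
Qed.

Lemma r_le_s (r : nat) : r%:R - 1 <= Num.sqrt ((r * (r - 1))%:R) :> R.
Proof.
case: r => [|r]; first by rewrite sub0r; apply: le_trans (sqrtr_ge0 _); rewrite lerN10.
rewrite -natr1 addrK subSS subn0 natrM.
apply: (@le_trans _ _ (Num.sqrt ((r%:R : R) ^+ 2))).
  by rewrite sqrtr_sqr ger0_norm ?ler0n.
apply: ler_wsqrtr; rewrite expr2; apply: ler_wpM2r; first exact: ler0n.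
by rewrite ler_nat.
Qed.

Lemma eps'_bound (r : nat) :
  eps / 2 + eps * Num.max eps mu ^+ d.-1 * Num.sqrt ((r * (r - 1))%:R)
  <= eps_prime d r eps mu.
Proof.
have e0 : 0 < eps by case/andP: heps.
have he : 2 <= expR (1 : R) by have := expR_ge1Dx (1 : R); rewrite (_ : 1 + 1 = 2 :> R) //.
set s := Num.sqrt _.
have s0 : 0 <= s by exact: sqrtr_ge0.
rewrite /eps_prime /=; case: eqP => [mu0|mu0].
  have -> : Num.max eps mu = eps by rewrite mu0; apply/max_idPl; exact: ltW.
  have -> : eps * eps ^+ d.-1 = eps ^+ d by rewrite -exprS prednK.
  rewrite -/s.
  have X0 : 0 <= s * eps ^+ d by apply: mulr_ge0 => //; apply: exprn_ge0; exact: ltW.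
  have h1 : eps / 2 <= eps * expR 1 by nra.
  have e2 : 1 <= expR (1 : R) * expR 1 by nra.
  have h2 : s * eps ^+ d <= expR 1 * expR 1 * (s * eps ^+ d).
    by rewrite -{1}(mul1r (s * _)); apply: ler_wpM2r.
  have -> : (eps + expR 1 * s * eps ^+ d) * expR 1 = eps * expR 1 + expR 1 * expR 1 * (s * eps ^+ d) by ring.
  rewrite (mulrC (eps ^+ d) s); lra.
rewrite -/s.
set P := Num.max eps mu ^+ d.-1.
set Mx := Num.max (eps ^+ d.-1) (mu ^+ d.-1).
have PM : P <= Mx.
  rewrite /P /Mx; case: (leP eps mu) => _; rewrite le_max lexx ?orbT //.
have P0 : 0 <= P by apply: exprn_ge0; rewrite le_max ltW.
have h0 : eps * s * P <= eps * s * Mx.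
  by apply: ler_wpM2l => //; apply: mulr_ge0 => //; exact: ltW.
have X0 : 0 <= eps * s * Mx by apply: le_trans h0; apply: mulr_ge0 => //; apply: mulr_ge0 => //; exact: ltW.
have e2 : 1 <= expR (1 : R) * expR 1 by nra.
have h2 : eps * s * Mx <= expR 1 * expR 1 * (eps * s * Mx).
  by rewrite -{1}(mul1r (eps * s * Mx)); apply: ler_wpM2r.
have h1 : eps / 2 <= eps * expR 1 by nra.
have -> : eps * (expR 1 + expR 1 ^+ 2 * s * Mx) = eps * expR 1 + expR 1 * expR 1 * (eps * s * Mx) by ring.
have -> : eps * P * s = eps * s * P by ring.
lra.
Qed.

Lemma main_sec (C : tensor R n) : (forall i, i \notin S -> C i = 0) ->
  `| tnorm2 (multi_mode_prod C U) - tnorm2 (multi_mode_prod (multi_mode_prod C U) A) |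
      <= eps_prime d #|S| eps (muB U S) * tnorm2 (multi_mode_prod C U).
Proof.
move=> CS.
set Y := multi_mode_prod C U.
have EY : (tnorm2 Y)%:C = \sum_(k in S) \sum_(h in S) C k * conjc (C h) * G k h.
  have -> : Y = (fun p => \sum_(k in S) C k * \prod_(l < d) y l k (p l) 0).
    by apply: funext => p; rewrite /Y (Y_form U CS).
  exact: (tnorm2_expand S C (fun k l => y l k)).
have EYA : (tnorm2 (multi_mode_prod Y A))%:C =
    \sum_(k in S) \sum_(h in S) C k * conjc (C h) * Aa k h.
  have -> : multi_mode_prod Y A =
      (fun p => \sum_(k in S) C k * \prod_(l < d) (A l *m y l k) (p l) 0).
    by apply: funext => p; rewrite /Y (YA_form U A CS).
  exact: (tnorm2_expand S C (fun k l => A l *m y l k)).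
pose c k := rn (C k).
pose T := \sum_(k in S) c k ^+ 2.
pose sig := \sum_(k in S) c k.
have c0 : forall k, 0 <= c k by move=> k; exact: rn_ge0.
have ET : tnorm2 Y = T.
  apply: complexI; rewrite EY rmorph_sum; apply: eq_bigr => k kS.
  rewrite (bigD1 k) //= big1 ?addr0; last first.
    by move=> h /andP[_ hk]; rewrite G_eq eq_sym (negbTE hk) mulr0.
  by rewrite G_eq eqxx mulr1 -cabs2C /c rn_sqr.
have ED : (tnorm2 Y - tnorm2 (multi_mode_prod Y A))%:C =
    \sum_(k in S) \sum_(h in S) C k * conjc (C h) * (G k h - Aa k h).
  rewrite rmorphB /= EY EYA -sumrB; apply: eq_bigr => k _.
  by rewrite -sumrB; apply: eq_bigr => h _; rewrite mulrBr.
have B1 : `|tnorm2 Y - tnorm2 (multi_mode_prod Y A)| <=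
    \sum_(k in S) \sum_(h in S) c k * c h * rn (G k h - Aa k h).
  rewrite -rnR ED; apply: le_trans (rn_sum _ _) _; apply: ler_sum => k _.
  apply: le_trans (rn_sum _ _) _; apply: ler_sum => h _.
  by rewrite !rnM rnJ.
pose W (k h : idx n) := B0 + (k == h)%:R * (eps / 2 - B0).
have B2 : \sum_(k in S) \sum_(h in S) c k * c h * rn (G k h - Aa k h) <=
    \sum_(k in S) \sum_(h in S) c k * c h * W k h.
  apply: ler_sum => k kS; apply: ler_sum => h hS.
  apply: ler_wpM2l; first by apply: mulr_ge0.
  rewrite /W; case: eqP => [<-|/eqP hk].
    have -> : B0 + true%:R * (eps / 2 - B0) = eps / 2 by rewrite mulr1n; ring.
    exact: diag.
  by rewrite mulr0n mul0r addr0; exact: offd.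
have B3 : \sum_(k in S) \sum_(h in S) c k * c h * W k h = B0 * (sig * sig) + (eps / 2 - B0) * T.
  have inner : forall k, k \in S ->
      \sum_(h in S) c k * c h * W k h = B0 * (c k * sig) + (eps / 2 - B0) * c k ^+ 2.
    move=> k kS; rewrite /sig (bigD1 k) //= [in RHS](bigD1 k) //=.
    rewrite /W eqxx mul1r.
    have -> : \sum_(h in S | h != k) c k * c h * (B0 + (k == h)%:R * (eps / 2 - B0))
        = B0 * (c k * \sum_(h in S | h != k) c h).
      rewrite !big_distrr /=; apply: eq_bigr => h /andP[_ hk].
      by rewrite eq_sym (negbTE hk) mul0r addr0; ring.
    ring.
  rewrite (eq_bigr _ inner) big_split /= -!big_distrr /= -big_distrl /=.
  by rewrite /T /sig.
have B4 : sig * sig <= #|S|%:R * T.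
  rewrite /sig big_distrl /=.
  have : \sum_(k in S) \sum_(h in S) c k * c h <=
         \sum_(k in S) \sum_(h in S) (c k ^+ 2 + c h ^+ 2) / 2.
    apply: ler_sum => k _; apply: ler_sum => h _.
    have : 0 <= (c k - c h) ^+ 2 by exact: sqr_ge0.
    lra.
  have E2 : \sum_(k in S) \sum_(h in S) (c k ^+ 2 + c h ^+ 2) / 2 = #|S|%:R * T.
    under eq_bigr do rewrite -big_distrl /= big_split /= sumr_const.
    rewrite -big_distrl /= big_split /= sumr_const -/T.
    rewrite sumrMnl -/T -[T *+ #|S|]mulr_natr.
    by field.

  rewrite E2 => H; apply: le_trans H; apply: ler_sum => k _.
  by rewrite big_distrr.
have T0 : 0 <= T by apply: sumr_ge0 => k _; apply: exprn_ge0.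
have B5 := r_le_s #|S|.
have B6 := B0_le.
have B7 := eps'_bound #|S|.
have B8 := B0_ge0.
apply: le_trans B1 _; apply: le_trans B2 _; rewrite B3 ET.
set s := Num.sqrt _ in B5 B7.
set P := eps * _ in B6 B7.
have s0 : 0 <= s by exact: sqrtr_ge0.
have h1 : B0 * (sig * sig) <= B0 * (#|S|%:R * T) by apply: ler_wpM2l.
have h2 : B0 * (#|S|%:R - 1) * T <= B0 * s * T.
  by apply: ler_wpM2r => //; apply: ler_wpM2l.
have h3 : B0 * s * T <= P * s * T.
  by apply: ler_wpM2r => //; apply: ler_wpM2r.
have h4 : (eps / 2 + P * s) * T <= eps_prime d #|S| eps mu * T by apply: ler_wpM2r.
rewrite /mu in h4.
nra.
Qed.
End Main.

End Helpers.
Import Helpers.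
Unset Implicit Arguments.

Theorem corollary3 (R : realType) (d : nat) (n m : 'I_d -> nat)
    (U : forall l : 'I_d, 'M[R[i]]_(n l)) (S : {set idx n})
    (A : forall l : 'I_d, 'M[R[i]]_(m l, n l)) (eps : R) :
  (0 < d)%N ->
  (forall l, unitary (U l)) ->
  0 < eps <= 3 / 4 ->
  (forall j : 'I_d, JL_embedding (eps / (4 * d%:R)) (A j) (JL_set U S j)) ->
  forall Y : tensor R n,
    (exists C : tensor R n,
        (forall i, i \notin S -> C i = 0) /\ Y = multi_mode_prod C U) ->
    `| tnorm2 Y - tnorm2 (multi_mode_prod Y A) |
      <= eps_prime d #|S| eps (muB U S) * tnorm2 Y.
Proof.
move=> hd hU heps hJL Y [C [CS ->]].
exact: (main_sec hd hU heps hJL CS).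
Qed.
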